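(* (Soundness.) Let $(C_1;\pi_1)$ and $(C_2;\pi_2)$ be constrained clauses and let $(R;\pi_R)$ be the conclusion of an SDC-Resolution inference with premises $(C_1;\pi_1)$ and $(C_2;\pi_2)$. Then every Herbrand interpretation satisfying both $(C_1;\pi_1)$ and $(C_2;\pi_2)$ satisfies $(R;\pi_R)$. Likewise, if $(R;\pi_R)$ is the conclusion of an SDC-Factoring inference with premise $(C;\pi)$, then every Herbrand interpretation satisfying $(C;\pi)$ satisfies $(R;\pi_R)$.
   Context: Clauses: a clause is written $\Gamma\rightarrow\Delta$ where $\Gamma,\Delta$ are finite multisets of atoms ($\Gamma$ the negative literals, $\Delta$ the positive literals); $\Gamma_1,\Gamma_2$ denotes multiset union. All predicates relevant here are monadic. Straight terms: a variable and a constant are straight; $f(s_1,\dots,s_n)$ is straight if $s_1,\dots,s_n$ are pairwise distinct variables except for at most one argument $s_i$ that is a straight term. The depth of variables and constants is $0$, depth$(f(s_1,\dots,s_n))=1+\max_i$ depth$(s_i)$. A term is shallow if its depth is at most 1, linear if no variable occurs twice in it. Straight dismatching constraints (SDCs): an atomic SDC is $t\neq s$ with $s,t$ variable-disjoint terms and $s$ straight; an SDC $\pi=\bigwedge_{i\in I} t_i\neq s_i$ is a finite conjunction of atomic SDCs ($\top$ = empty conjunction, $\bot$ = false). For a substitution $\sigma$, $\pi\sigma=\bigwedge_i t_i\sigma\neq s_i$. A solution of $\pi$ is a grounding substitution $\delta$ such that for no $i$ is $t_i\delta$ an instance of $s_i$ (i.e. there is no $\tau$ with $t_i\delta=s_i\tau$);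 $\pi$ is solvable if it has a solution. The normalization $\mathrm{norm}(\pi)$ is the normal form of $\pi$ under the rewrite rules: $\pi\wedge f(t_1,\dots,t_n)\neq y \to \bot$; $\pi\wedge f(t_1,\dots,t_n)\neq f(y_1,\dots,y_n)\to\bot$ ($y_i$ variables); $\pi\wedge f(t_1,\dots,t_n)\neq f(s_1,\dots,s_n)\to \pi\wedge t_i\neq s_i$ if $s_i$ is complex (non-variable); $\pi\wedge f(t_1,\dots,t_n)\neq g(s_1,\dots,s_m)\to\pi$ for $f\neq g$; $\pi\wedge x\neq s\wedge x\neq s\sigma\to\pi\wedge x\neq s$. Constrained clauses: a pair $(C;\pi)$ of a clause and an SDC; $(C;\pi)\sigma=(C\sigma;\pi\sigma)$. Its ground instances are the clauses $C\delta$ with $\delta$ a solution of $\pi$ grounding all variables of $C$ and of the left-hand sides of $\pi$. A Herbrand interpretation $I$ is a set of ground atoms; $I$ satisfies a ground clause $\Gamma\rightarrow\Delta$ if $\Delta\cap I\neq\emptyset$ or $\Gamma\not\subseteq I$; $I$ satisfies $(C;\pi)$ if it satisfies all its ground instances. MSL(SDC) clauses: $(C;\pi)$ with $\pi$ an SDC and $C=\Gamma\rightarrow\Delta$ an MSL clause, i.e. (i) all argument terms of atoms in $\Delta$ are shallow, every atom in $\Delta$ is linear and distinct atoms of $\Delta$ share no variables, (ii) all predicates are monadic, (iii) no equations occur in $\Delta$, (iv) no equations occur in $\Gamma$, or $\Gamma=\{s\approx t\}$ with $\Delta$ empty and $s,t$ not unifiable. Ordering: $\prec$ is an atom ordering (irreflexive,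 well-founded, total on ground atoms), lifted to literals by representing $A$ as $\{A\}$ and $\neg A$ as $\{A,A\}$ and comparing by multiset extension, and to ground clauses by the multiset extension of the literal ordering. Standing assumption: for ground atoms $Q(s)$ and $P(t)$ where $s$ is a proper subterm of $t$, the literal $\neg Q(s)$ is not greater than the literal $P(t)$. A literal $A$ is maximal [strictly maximal] in $(C\vee A;\pi)$ if there is a solution $\delta$ of $\pi$ such that $B\delta\preceq A\delta$ [$B\delta\prec A\delta$] for all literals $B$ of $C$. Selection function: for an MSL(SDC) clause $(S_1(t_1),\dots,S_n(t_n)\rightarrow P_1(s_1),\dots,P_m(s_m);\pi)$, $\mathrm{sel}(C)$ consists of those $S_i(t_i)$ such that (1) $t_i$ is not a variable, or (2) $t_1,\dots,t_n$ are all variables and $t_i\notin\mathrm{vars}(s_1,\dots,s_m)$, or (3) $\{t_1,\dots,t_n\}\subseteq\mathrm{vars}(s_1,\dots,s_m)$ and $s_j=t_i$ for some $j$. SDC-Resolution: from variable-disjoint $(\Gamma_1\rightarrow\Delta_1,A;\pi_1)$ and $(\Gamma_2,B\rightarrow\Delta_2;\pi_2)$ infer $((\Gamma_1,\Gamma_2\rightarrow\Delta_1,\Delta_2)\sigma;\mathrm{norm}((\pi_1\wedge\pi_2)\sigma))$ provided: $\sigma=\mathrm{mgu}(A,B)$; $\mathrm{norm}((\pi_1\wedge\pi_2)\sigma)$ is solvable; $A\sigma$ is strictly maximal in $(\Gamma_1\rightarrow\Delta_1,A;\pi_1)\sigma$ and $\mathrm{sel}(\Gamma_1\rightarrow\Delta_1,A)=\emptyset$;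 and either $B\in\mathrm{sel}(\Gamma_2,B\rightarrow\Delta_2)$, or $\mathrm{sel}(\Gamma_2,B\rightarrow\Delta_2)=\emptyset$ and $\neg B\sigma$ is maximal in $(\Gamma_2,B\rightarrow\Delta_2;\pi_2)\sigma$. SDC-Factoring: from $(\Gamma\rightarrow\Delta,A,B;\pi)$ infer $((\Gamma\rightarrow\Delta,A)\sigma;\mathrm{norm}(\pi\sigma))$ provided $\sigma=\mathrm{mgu}(A,B)$, $\mathrm{sel}(\Gamma\rightarrow\Delta,A,B)=\emptyset$, $A\sigma$ is maximal in $(\Gamma\rightarrow\Delta,A,B;\pi)\sigma$, and $\mathrm{norm}(\pi\sigma)$ is solvable. *)

(* Defs.v *)
From Stdlib Require Import List Permutation Relations.
Import ListNotations.

Section SDC.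

Variable F : Type.
Variable arity : F -> nat.
Variable Pred : Type.

Inductive term : Type :=
| Var (x : nat)
| Fn (f : F) (args : list term).

Inductive wf : term -> Prop :=
| wf_var x : wf (Var x)
| wf_fn f ts : length ts = arity f -> Forall wf ts -> wf (Fn f ts).

Inductive occurs (x : nat) : term -> Prop :=
| occ_var : occurs x (Var x)
| occ_fn f ts u : In u ts -> occurs x u -> occurs x (Fn f ts).

Definition ground (t : term) : Prop := forall x, ~ occurs x t.

Inductive proper_subterm : term -> term -> Prop :=
| psub_arg s f ts : In s ts -> proper_subterm s (Fn f ts)
| psub_trans s f ts u : In u ts -> proper_subterm s u -> proper_subterm s (Fn f ts).

Definition subst_t := nat -> term.

Fixpoint subst (sg : subst_t) (t : term) : term :=
  match t with
  | Var x => sg x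
  | Fn f ts => Fn f (map (subst sg) ts)
  end.

Inductive straight : term -> Prop :=
| st_var x : straight (Var x)
| st_vars f xs : NoDup xs -> straight (Fn f (map Var xs))
| st_one f xs1 u xs2 : NoDup (xs1 ++ xs2) -> straight u ->
    straight (Fn f (map Var xs1 ++ u :: map Var xs2)).

Definition atom : Type := (Pred * term)%type.
Definition subst_atom (sg : subst_t) (a : atom) : atom := (fst a, subst sg (snd a)).
Definition occurs_atom (x : nat) (a : atom) : Prop := occurs x (snd a).

(* Clauses Gamma -> Delta, multisets represented by lists (up to permutation). *)
Definition clause : Type := (list atom * list atom)%type.
Definition subst_clause (sg : subst_t) (C : clause) : clause :=
  (map (subst_atom sg) (fst C), map (subst_atom sg) (snd C)).
Definition occurs_clause (x : nat) (C : clause) : Prop :=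
  exists a, (In a (fst C) \/ In a (snd C)) /\ occurs_atom x a.

(* Literals and their ordering: A as {A}, not A as {A,A}, multiset extension. *)
Inductive lit : Type := Pos (a : atom) | Neg (a : atom).
Definition subst_lit (sg : subst_t) (L : lit) : lit :=
  match L with Pos a => Pos (subst_atom sg a) | Neg a => Neg (subst_atom sg a) end.
Definition lit_atom (L : lit) : atom := match L with Pos a => a | Neg a => a end.
Definition lit_ms (L : lit) : list atom := match L with Pos a => [a] | Neg a => [a; a] end.

Definition mul_lt {A : Type} (lt : A -> A -> Prop) (M N : list A) : Prop :=
  exists X Y Z, Permutation M (Z ++ Y) /\ Permutation N (Z ++ X) /\ X <> [] /\
    forall y, In y Y -> exists x, In x X /\ lt y x.

Definition lit_lt (lt : atom -> atom -> Prop) (K L : lit) : Prop :=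
  mul_lt lt (lit_ms K) (lit_ms L).
Definition lit_le (lt : atom -> atom -> Prop) (K L : lit) : Prop :=
  lit_lt lt K L \/ K = L.

Definition ground_atom (a : atom) : Prop := ground (snd a) /\ wf (snd a).

(* An atom ordering: irreflexive, (transitive), well-founded, total on
   ground atoms, plus the standing assumption of the paper. *)
Definition atom_ordering (lt : atom -> atom -> Prop) : Prop :=
  (forall a, ~ lt a a) /\
  (forall a b c, lt a b -> lt b c -> lt a c) /\
  well_founded lt /\
  (forall a b, ground_atom a -> ground_atom b -> a <> b -> lt a b \/ lt b a) /\
  (forall Q s P t, ground s -> wf s -> ground t -> wf t -> proper_subterm s t ->
      ~ lit_lt lt (Pos (P, t)) (Neg (Q, s))).

(* SDCs: Bot, or a finite conjunction of atomic constraints t <> s,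
   represented by the pair (t, s); the empty conjunction is Top. *)
Inductive sdc : Type := Bot | Conj (l : list (term * term)).

Definition is_sdc (pi : sdc) : Prop :=
  match pi with
  | Bot => True
  | Conj l => forall t s, In (t, s) l ->
      straight s /\ (forall x, occurs x t -> ~ occurs x s)
  end.

Definition sdc_subst (sg : subst_t) (pi : sdc) : sdc :=
  match pi with
  | Bot => Bot
  | Conj l => Conj (map (fun p => (subst sg (fst p), snd p)) l)
  end.

Definition sdc_and (p1 p2 : sdc) : sdc :=
  match p1, p2 with
  | Conj l1, Conj l2 => Conj (l1 ++ l2)
  | _, _ => Bot
  end.

Definition occurs_lhs (x : nat) (pi : sdc) : Prop :=
  match pi with
  | Bot => False
  | Conj l => exists t s, In (t, s) l /\ occurs x t
  end.

Definition grounds_var (dl : subst_t) (x : nat) : Prop :=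
  ground (dl x) /\ wf (dl x).

Definition is_instance (t s : term) : Prop := exists tau, t = subst tau s.

Definition solution (pi : sdc) (dl : subst_t) : Prop :=
  match pi with
  | Bot => False
  | Conj l =>
      (forall x, occurs_lhs x pi -> grounds_var dl x) /\
      forall t s, In (t, s) l -> ~ is_instance (subst dl t) s
  end.

Definition solvable (pi : sdc) : Prop := exists dl, solution pi dl.

(* Rewrite rules of normalization (conjunction taken modulo permutation). *)
Inductive norm_step : sdc -> sdc -> Prop :=
| ns_var l f ts y rho :
    Permutation l ((Fn f ts, Var y) :: rho) -> norm_step (Conj l) Bot
| ns_vars l f ts ys rho :
    length ys = length ts ->
    Permutation l ((Fn f ts, Fn f (map Var ys)) :: rho) -> norm_step (Conj l) Bot
| ns_dec l f ts ss rho i t0 s0 :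
    length ss = length ts -> i < length ss ->
    (exists g us, nth i ss s0 = Fn g us) ->
    Permutation l ((Fn f ts, Fn f ss) :: rho) ->
    norm_step (Conj l) (Conj ((nth i ts t0, nth i ss s0) :: rho))
| ns_clash l f ts g ss rho :
    f <> g ->
    Permutation l ((Fn f ts, Fn g ss) :: rho) -> norm_step (Conj l) (Conj rho)
| ns_inst l x s sg rho :
    Permutation l ((Var x, s) :: (Var x, subst sg s) :: rho) ->
    norm_step (Conj l) (Conj ((Var x, s) :: rho)).

Definition norm_of (pi pi' : sdc) : Prop :=
  clos_refl_trans sdc norm_step pi pi' /\ ~ (exists pi'', norm_step pi' pi'').

Definition cclause_wf (C : clause) (pi : sdc) : Prop :=
  is_sdc pi /\
  (forall a, In a (fst C) \/ In a (snd C) -> wf (snd a)) /\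
  (match pi with Bot => True | Conj l => forall t s, In (t, s) l -> wf t /\ wf s end).

Definition var_disjoint (C1 : clause) (p1 : sdc) (C2 : clause) (p2 : sdc) : Prop :=
  forall x, (occurs_clause x C1 \/ occurs_lhs x p1) ->
            ~ (occurs_clause x C2 \/ occurs_lhs x p2).

Definition interp : Type := atom -> Prop.

Definition sat_ground (I : interp) (C : clause) : Prop :=
  (exists a, In a (snd C) /\ I a) \/ ~ (forall a, In a (fst C) -> I a).

Definition satisfies (I : interp) (C : clause) (pi : sdc) : Prop :=
  forall dl, solution pi dl -> (forall x, occurs_clause x C -> grounds_var dl x) ->
    sat_ground I (subst_clause dl C).

Definition is_mgu (sg : subst_t) (a b : atom) : Prop :=
  subst_atom sg a = subst_atom sg b /\
  forall th, subst_atom th a = subst_atom th b ->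
    exists tau, forall x, th x = subst tau (sg x).

(* L is [strictly] maximal in (C v L; pi), where others = literals of C *)
Definition maximal_in (lt : atom -> atom -> Prop) (strict : bool)
    (L : lit) (others : list lit) (pi : sdc) : Prop :=
  exists dl, solution pi dl /\
    (forall x, (occurs_atom x (lit_atom L) \/
                exists K, In K others /\ occurs_atom x (lit_atom K)) -> grounds_var dl x) /\
    forall K, In K others ->
      if strict then lit_lt lt (subst_lit dl K) (subst_lit dl L)
      else lit_le lt (subst_lit dl K) (subst_lit dl L).

Definition lits_of (G D : list atom) : list lit := map Neg G ++ map Pos D.

Definition in_sel (C : clause) (a : atom) : Prop :=
  In a (fst C) /\
  ( (exists f ts, snd a = Fn f ts)
  \/ ((forall b, In b (fst C) -> exists y, snd b = Var y) /\
      exists x, snd a = Var x /\ ~ (exists b, In b (snd C) /\ occurs_atom x b))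
  \/ ((forall b, In b (fst C) -> exists y, snd b = Var y /\
                   exists c, In c (snd C) /\ occurs_atom y c) /\
      exists c, In c (snd C) /\ snd c = snd a) ).

Definition sel_empty (C : clause) : Prop := forall a, ~ in_sel C a.

Definition sdc_resolution (lt : atom -> atom -> Prop)
    (C1 : clause) (p1 : sdc) (C2 : clause) (p2 : sdc) (R : clause) (pR : sdc) : Prop :=
  exists G1 D1 A G2 D2 B sg,
    var_disjoint C1 p1 C2 p2 /\
    Permutation (fst C1) G1 /\ Permutation (snd C1) (A :: D1) /\
    Permutation (fst C2) (B :: G2) /\ Permutation (snd C2) D2 /\
    is_mgu sg A B /\
    Permutation (fst R) (map (subst_atom sg) (G1 ++ G2)) /\
    Permutation (snd R) (map (subst_atom sg) (D1 ++ D2)) /\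
    norm_of (sdc_subst sg (sdc_and p1 p2)) pR /\
    solvable pR /\
    maximal_in lt true (Pos (subst_atom sg A))
      (lits_of (map (subst_atom sg) G1) (map (subst_atom sg) D1)) (sdc_subst sg p1) /\
    sel_empty (G1, A :: D1) /\
    ( in_sel (B :: G2, D2) B
    \/ (sel_empty (B :: G2, D2) /\
        maximal_in lt false (Neg (subst_atom sg B))
          (lits_of (map (subst_atom sg) G2) (map (subst_atom sg) D2)) (sdc_subst sg p2)) ).

Definition sdc_factoring (lt : atom -> atom -> Prop)
    (C : clause) (p : sdc) (R : clause) (pR : sdc) : Prop :=
  exists G D A B sg,
    Permutation (fst C) G /\ Permutation (snd C) (A :: B :: D) /\
    is_mgu sg A B /\
    Permutation (fst R) (map (subst_atom sg) G) /\
    Permutation (snd R) (map (subst_atom sg) (A :: D)) /\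
    sel_empty (G, A :: B :: D) /\
    maximal_in lt false (Pos (subst_atom sg A))
      (lits_of (map (subst_atom sg) G) (map (subst_atom sg) (B :: D))) (sdc_subst sg p) /\
    norm_of (sdc_subst sg p) pR /\
    solvable pR.

End SDC.

Arguments Var {F} x.
Arguments Fn {F} f args.

(* Main.v *)
Require Import Defs.
From Stdlib Require Import List Permutation Relations Classical ClassicalEpsilon.
Import ListNotations.

Section Aux.
Variable F : Type.
Variable arity : F -> nat.
Variable Pred : Type.

Definition term_ind' (P : term F -> Prop) (HV : forall x, P (Var x))
  (HF : forall f ts, Forall P ts -> P (Fn f ts)) : forall t, P t :=
  fix go t := match t with
  | Var x => HV x
  | Fn f ts => HF f ts ((fix go2 l : Forall P l := match l with
       | [] => @Forall_nil _ P
       | u :: l' => @Forall_cons _ P u l' (go u) (go2 l') end) ts)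
  end.

Lemma subst_comp (f g : subst_t F) t :
  subst F f (subst F g t) = subst F (fun x => subst F f (g x)) t.
Proof.
  induction t using term_ind'; simpl; auto.
  f_equal. rewrite map_map. apply map_ext_in. intros u Hu.
  rewrite Forall_forall in H. apply H; auto.
Qed.

Lemma subst_ext (f g : subst_t F) t :
  (forall x, occurs F x t -> f x = g x) -> subst F f t = subst F g t.
Proof.
  induction t using term_ind'; intros Hx; simpl.
  - apply Hx; constructor.
  - f_equal. apply map_ext_in. intros u Hu. rewrite Forall_forall in H.
    apply H; auto. intros x Hox. apply Hx. econstructor; eauto.
Qed.

Lemma occurs_subst (dl : subst_t F) t y :
  occurs F y (subst F dl t) -> exists x, occurs F x t /\ occurs F y (dl x).
Proof.
  induction t using term_ind'; simpl; intros Ho.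
  - exists x; split; [constructor|auto].
  - inversion Ho as [|f0 ts0 u Hin Hou]; subst.
    apply in_map_iff in Hin as [v [Hv Hin]]. subst.
    rewrite Forall_forall in H. destruct (H v Hin Hou) as [x [H1 H2]].
    exists x; split; auto. econstructor; eauto.
Qed.

Lemma ground_subst (dl : subst_t F) t :
  (forall x, ground F (dl x)) -> ground F (subst F dl t).
Proof.
  intros Hd y Ho. destruct (occurs_subst dl t y Ho) as [x [_ H]]. exact (Hd x y H).
Qed.

Lemma wf_subst (dl : subst_t F) t :
  (forall x, wf F arity (dl x)) -> wf F arity t -> wf F arity (subst F dl t).
Proof.
  induction t using term_ind'; simpl; intros Hd Hw; auto.
  inversion Hw as [|f0 ts0 Hl Hf]; subst. constructor.
  - rewrite length_map; auto.
  - rewrite Forall_forall in *. intros v Hv. apply in_map_iff in Hv as [u [<- Hu]].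
    apply H; auto.
Qed.

Lemma wf_subst_inv (tau : subst_t F) t :
  wf F arity (subst F tau t) -> wf F arity t.
Proof.
  induction t using term_ind'; simpl; intros Hw.
  - constructor.
  - inversion Hw as [|f0 ts0 Hl Hf]; subst. constructor.
    + rewrite length_map in Hl; auto.
    + rewrite Forall_forall in *. intros u Hu. apply H; auto. apply Hf. apply in_map; auto.
Qed.

Fixpoint rep (t : term F) : term F := match t with
 | Var x => Var x
 | Fn f ts => if Nat.eqb (length ts) (arity f) then Fn f (map rep ts) else Var 0 end.

Lemma rep_wf t : wf F arity (rep t).
Proof.
  induction t using term_ind'; simpl.
  - constructor.
  - destruct (PeanoNat.Nat.eqb_spec (length ts) (arity f)).
    + constructor. rewrite length_map; auto.
      rewrite Forall_forall in *. intros v Hv. apply in_map_iff in Hv as [u [<- Hu]]. auto.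
    + constructor.
Qed.

Lemma rep_subst (sg : subst_t F) t : wf F arity t ->
  rep (subst F sg t) = subst F (fun x => rep (sg x)) t.
Proof.
  induction t using term_ind'; simpl; intros Hw; auto.
  inversion Hw as [|f0 ts0 Hl Hf]; subst.
  rewrite length_map, Hl, PeanoNat.Nat.eqb_refl. f_equal. rewrite map_map. apply map_ext_in.
  intros u Hu. rewrite Forall_forall in *. apply H; auto.
Qed.

Lemma mgu_wf sg (A B : atom F Pred) : wf F arity (snd A) -> wf F arity (snd B) ->
  is_mgu F Pred sg A B -> forall x, wf F arity (sg x).
Proof.
  intros HA HB [Heq Hmg] x.
  destruct (Hmg (fun y => rep (sg y))) as [tau Htau].
  - unfold subst_atom in *. simpl in *. injection Heq as H1 H2.
    rewrite <- (rep_subst sg (snd A)) by assumption.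
    rewrite <- (rep_subst sg (snd B)) by assumption.
    rewrite H1, H2; reflexivity.
  - apply (wf_subst_inv tau). rewrite <- Htau. apply rep_wf.
Qed.

Definition total (dl : subst_t F) := forall x, grounds_var F arity dl x.

Lemma sol_conj dl l : total dl ->
  (forall t s, In (t,s) l -> ~ is_instance F (subst F dl t) s) ->
  solution F arity (Conj F l) dl.
Proof. intros Ht H. split; auto. Qed.

Lemma step_back dl pi pi' : total dl -> norm_step F pi pi' ->
  solution F arity pi' dl -> solution F arity pi dl.
Proof.
  intros Ht Hs Hsol.
  destruct Hs as [l f ts y rho Hp | l f ts ys rho Hl Hp
    | l f ts ss rho i t0 s0 Hl Hi Hex Hp | l f ts g ss rho Hfg Hp | l x s th rho Hp].
  - destruct Hsol.
  - destruct Hsol.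
  - destruct Hsol as [_ Hsol]. apply sol_conj; auto. intros t s Hin Hinst.
    apply (Permutation_in _ Hp) in Hin. destruct Hin as [Heq|Hin].
    + injection Heq as <- <-. destruct Hinst as [tau Htau]. simpl in Htau.
      injection Htau as Hm.
      apply (Hsol (nth i ts t0) (nth i ss s0)); [left; auto|].
      exists tau.
      assert (E: nth i (map (subst F dl) ts) (subst F dl t0)
               = nth i (map (subst F tau) ss) (subst F dl t0)) by (rewrite Hm; auto).
      rewrite map_nth in E. rewrite E.
      rewrite (nth_indep _ _ (subst F tau s0)) by (rewrite length_map; auto).
      rewrite map_nth. auto.
    + apply (Hsol t s); [right; auto | auto].
  - destruct Hsol as [_ Hsol]. apply sol_conj; auto. intros t s Hin Hinst.
    apply (Permutation_in _ Hp) in Hin. destruct Hin as [Heq|Hin].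
    + injection Heq as <- <-. destruct Hinst as [tau Htau]. simpl in Htau.
      injection Htau as Hm. auto.
    + apply (Hsol t s); auto.
  - destruct Hsol as [_ Hsol]. apply sol_conj; auto. intros t s' Hin Hinst.
    apply (Permutation_in _ Hp) in Hin. destruct Hin as [Heq|[Heq|Hin]].
    + injection Heq as <- <-. apply (Hsol (Var x) s); [left; auto|auto].
    + injection Heq as <- <-. destruct Hinst as [tau Htau].
      rewrite subst_comp in Htau.
      apply (Hsol (Var x) s); [left; auto|]. eexists; eauto.
    + apply (Hsol t s'); [right; auto | auto].
Qed.

Lemma norm_back dl pi pi' : total dl -> clos_refl_trans (sdc F) (norm_step F) pi pi' ->
  solution F arity pi' dl -> solution F arity pi dl.
Proof.
  intros Ht H. induction H; eauto using step_back.
Qed.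

Variable c : F.
Hypothesis Hc : arity c = 0.

Definition g0 : term F := Fn c [].

Definition mk (dl : subst_t F) : subst_t F := fun x =>
  if excluded_middle_informative (grounds_var F arity dl x) then dl x else g0.

Lemma mk_total dl : total (mk dl).
Proof.
  intros x. unfold grounds_var, mk.
  destruct (excluded_middle_informative _) as [H|H]; auto.
  split.
  - intros y Ho. inversion Ho as [|f0 ts0 u Hin Hou]; subst. destruct Hin.
  - constructor; simpl; auto.
Qed.

Lemma mk_eq dl x : grounds_var F arity dl x -> mk dl x = dl x.
Proof.
  intros H. unfold mk. destruct (excluded_middle_informative _); tauto.
Qed.

Lemma atom_comp (f g : subst_t F) (a : atom F Pred) :
  subst_atom F Pred f (subst_atom F Pred g a)
  = subst_atom F Pred (fun x => subst F f (g x)) a.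
Proof. unfold subst_atom; simpl. rewrite subst_comp. auto. Qed.

End Aux.

Lemma in_map_perm {A B : Type} (f : A -> B) L M a :
  Permutation L M -> In a (map f L) -> exists b, In b M /\ a = f b.
Proof.
  intros Hp Hin. apply in_map_iff in Hin as [b [<- Hb]]. exists b. split; auto.
  eapply Permutation_in; eauto.
Qed.

Lemma in_map_perm2 {A B : Type} (f : A -> B) L M b :
  Permutation L M -> In b M -> In (f b) (map f L).
Proof.
  intros Hp Hin. apply in_map. eapply Permutation_in; [apply Permutation_sym; eauto|]; auto.
Qed.

Theorem lemma1 (F : Type) (arity : F -> nat) (Pred : Type)
  (Hconst : exists c : F, arity c = 0)
  (lt : atom F Pred -> atom F Pred -> Prop)
  (Hlt : atom_ordering F arity Pred lt) :
  (forall (C1 : clause F Pred) (p1 : sdc F) (C2 : clause F Pred) (p2 : sdc F)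
          (R : clause F Pred) (pR : sdc F),
     cclause_wf F arity Pred C1 p1 -> cclause_wf F arity Pred C2 p2 ->
     sdc_resolution F arity Pred lt C1 p1 C2 p2 R pR ->
     forall I : interp F Pred,
       satisfies F arity Pred I C1 p1 -> satisfies F arity Pred I C2 p2 ->
       satisfies F arity Pred I R pR) /\
  (forall (C : clause F Pred) (p : sdc F) (R : clause F Pred) (pR : sdc F),
     cclause_wf F arity Pred C p ->
     sdc_factoring F arity Pred lt C p R pR ->
     forall I : interp F Pred,
       satisfies F arity Pred I C p -> satisfies F arity Pred I R pR).
Proof.
  destruct Hconst as [c Hc].
  assert (Prep : forall (R : clause F Pred) pR dl,
    solution F arity pR dl -> (forall x, occurs_clause F Pred x R -> grounds_var F arity dl x) ->
    solution F arity pR (mk F arity c dl) /\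
    subst_clause F Pred dl R = subst_clause F Pred (mk F arity c dl) R).
  { intros R pR dl Hsol Hgr. split.
    - destruct pR as [|l]; [destruct Hsol|]. destruct Hsol as [Hg Hn].
      apply sol_conj; [apply mk_total; auto|]. intros t s Hin.
      rewrite (subst_ext F (mk F arity c dl) dl t). apply Hn; auto.
      intros x Ho. apply mk_eq. apply Hg. simpl. exists t, s; auto.
    - unfold subst_clause. f_equal; apply map_ext_in; intros a Ha; unfold subst_atom;
      f_equal; apply subst_ext; intros x Hx; symmetry; apply mk_eq; apply Hgr;
      exists a; split; auto. }
  assert (Etot : forall (sg d0 : subst_t F), total F arity d0 -> (forall x, wf F arity (sg x)) ->
     total F arity (fun x => subst F d0 (sg x))).
  { intros sg d0 Ht Hw x. split.
    - apply ground_subst. intros y. apply Ht.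
    - apply wf_subst; auto. intros y; apply Ht. }
  split.
  - intros C1 p1 C2 p2 R pR W1 W2 Hres I S1 S2 dl Hsol Hgr.
    destruct Hres as (G1 & D1 & A & G2 & D2 & B & sg & Hvd & P1 & P2 & P3 & P4 & Hmgu
                      & PR1 & PR2 & Hnorm & _).
    destruct (Prep R pR dl Hsol Hgr) as [Hsol0 ER]. rewrite ER. clear ER.
    set (d0 := mk F arity c dl) in *.
    assert (Ht0 : total F arity d0) by (apply mk_total; auto).
    pose proof (norm_back F arity d0 _ _ Ht0 (proj1 Hnorm) Hsol0) as Hsub.
    assert (HwA : wf F arity (snd A)).
    { apply (proj1 (proj2 W1)). right. eapply Permutation_in; [apply Permutation_sym; eauto|]. left; auto. }
    assert (HwB : wf F arity (snd B)).
    { apply (proj1 (proj2 W2)). left. eapply Permutation_in; [apply Permutation_sym; eauto|]. left; auto. }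
    pose proof (mgu_wf F arity Pred sg A B HwA HwB Hmgu) as Hsgw.
    set (e := fun x => subst F d0 (sg x)).
    assert (Hte : total F arity e) by (apply Etot; auto).
    destruct p1 as [|l1]; [destruct Hsub|]. destruct p2 as [|l2]; [destruct Hsub|].
    simpl in Hsub. destruct Hsub as [_ Hn].
    assert (Sol : forall l, (forall t s, In (t,s) l -> In (t,s) (l1 ++ l2)) ->
                  solution F arity (Conj F l) e).
    { intros l Hl. apply sol_conj; auto. intros t s Hin Hi.
      apply (Hn (subst F sg t) s).
      - apply in_map_iff. exists (t, s). auto.
      - unfold e. rewrite subst_comp. auto. }
    assert (S1' := S1 e (Sol l1 (fun t s H => in_or_app _ _ _ (or_introl H))) (fun x _ => Hte x)).
    assert (S2' := S2 e (Sol l2 (fun t s H => in_or_app _ _ _ (or_intror H))) (fun x _ => Hte x)).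
    assert (EAB : subst_atom F Pred e A = subst_atom F Pred e B).
    { unfold e. rewrite <- !atom_comp. rewrite (proj1 Hmgu). auto. }
    unfold sat_ground, subst_clause in *; simpl in *.
    destruct (classic (forall a, In a (map (subst_atom F Pred d0) (fst R)) -> I a)) as [Hall|Hn0];
      [left|right; auto].
    assert (HG : forall g, In g (G1 ++ G2) -> I (subst_atom F Pred e g)).
    { intros g Hg. unfold e. rewrite <- atom_comp. apply Hall.
      apply in_map. eapply Permutation_in; [apply Permutation_sym; eauto|]. apply in_map; auto. }
    assert (HD : forall g, In g (D1 ++ D2) -> I (subst_atom F Pred e g) ->
       exists a, In a (map (subst_atom F Pred d0) (snd R)) /\ I a).
    { intros g Hg Ig. exists (subst_atom F Pred e g). split; auto. unfold e. rewrite <- atom_comp.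
      apply in_map. eapply Permutation_in; [apply Permutation_sym; eauto|]. apply in_map; auto. }
    destruct S1' as [[a [Ha Ia]]|Hn1].
    + destruct (in_map_perm _ _ _ _ P2 Ha) as [b [[<-|Hb] ->]].
      * destruct S2' as [[a' [Ha' Ia']]|Hn2].
        -- destruct (in_map_perm _ _ _ _ P4 Ha') as [b' [Hb' ->]].
           apply (HD b'); auto. apply in_or_app; auto.
        -- exfalso. apply Hn2. intros a' Ha'.
           destruct (in_map_perm _ _ _ _ P3 Ha') as [b' [[<-|Hb'] ->]].
           ++ rewrite <- EAB; auto.
           ++ apply HG. apply in_or_app; auto.
      * apply (HD b); auto. apply in_or_app; auto.
    + exfalso. apply Hn1. intros a' Ha'.
      destruct (in_map_perm _ _ _ _ P1 Ha') as [b' [Hb' ->]].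
      apply HG. apply in_or_app; auto.
  - intros C p R pR W Hf I S dl Hsol Hgr.
    destruct Hf as (G & D & A & B & sg & P1 & P2 & Hmgu & PR1 & PR2 & _ & _ & Hnorm & _).
    destruct (Prep R pR dl Hsol Hgr) as [Hsol0 ER]. rewrite ER. clear ER.
    set (d0 := mk F arity c dl) in *.
    assert (Ht0 : total F arity d0) by (apply mk_total; auto).
    pose proof (norm_back F arity d0 _ _ Ht0 (proj1 Hnorm) Hsol0) as Hsub.
    assert (HwA : wf F arity (snd A)).
    { apply (proj1 (proj2 W)). right. eapply Permutation_in; [apply Permutation_sym; eauto|]. left; auto. }
    assert (HwB : wf F arity (snd B)).
    { apply (proj1 (proj2 W)). right. eapply Permutation_in; [apply Permutation_sym; eauto|]. right; left; auto. }
    pose proof (mgu_wf F arity Pred sg A B HwA HwB Hmgu) as Hsgw.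
    set (e := fun x => subst F d0 (sg x)).
    assert (Hte : total F arity e) by (apply Etot; auto).
    destruct p as [|l]; [destruct Hsub|].
    simpl in Hsub. destruct Hsub as [_ Hn].
    assert (Sol : solution F arity (Conj F l) e).
    { apply sol_conj; auto. intros t s Hin Hi.
      apply (Hn (subst F sg t) s).
      - apply in_map_iff. exists (t, s). auto.
      - unfold e. rewrite subst_comp. auto. }
    assert (S' := S e Sol (fun x _ => Hte x)).
    assert (EAB : subst_atom F Pred e A = subst_atom F Pred e B).
    { unfold e. rewrite <- !atom_comp. rewrite (proj1 Hmgu). auto. }
    unfold sat_ground, subst_clause in *; simpl in *.
    destruct (classic (forall a, In a (map (subst_atom F Pred d0) (fst R)) -> I a)) as [Hall|Hn0];
      [left|right; auto].
    assert (HD : forall g, In g (A :: D) -> I (subst_atom F Pred e g) ->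
       exists a, In a (map (subst_atom F Pred d0) (snd R)) /\ I a).
    { intros g Hg Ig. exists (subst_atom F Pred e g). split; auto. unfold e. rewrite <- atom_comp.
      apply in_map. eapply Permutation_in; [apply Permutation_sym; eauto|]. apply (in_map (subst_atom F Pred sg) (A :: D)); auto. }
    destruct S' as [[a [Ha Ia]]|Hn1].
    + destruct (in_map_perm _ _ _ _ P2 Ha) as [b [[<-|[<-|Hb]] ->]].
      * apply (HD A); simpl; auto.
      * apply (HD A); simpl; auto. rewrite EAB; auto.
      * apply (HD b); simpl; auto.
    + exfalso. apply Hn1. intros a' Ha'.
      destruct (in_map_perm _ _ _ _ P1 Ha') as [b' [Hb' ->]].
      unfold e. rewrite <- atom_comp. apply Hall.
      apply in_map. eapply Permutation_in; [apply Permutation_sym; eauto|]. apply in_map; auto.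
Qed.
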